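(* In the protocol IT-HS described in the context, with $f<\frac{n}{3}$ Byzantine parties, if some nonfaulty party sets $key3=v$ and $key3\_val=val$ in view $v$, then there exist $f+1$ nonfaulty parties whose $suggest$ messages in every view $v'>v$ support the pair $(v,val)$.
   Context: Model. $n$ parties with inputs $x_i$; up to $f$ Byzantine (arbitrary behaviour), the rest nonfaulty; authenticated point-to-point channels; partial synchrony: after an unknown time GST every message arrives within known $\Delta$ time and clocks are synchronized, before GST delays are arbitrary but finite. A party does something ''in view $v$'' if its variable $view$ equals $v$ at that time. Support: a $suggest$ message whose $key2$, $key2\_val$, $prev\_key2$ fields are $(k2,v2,pk2)$ supports a pair $(K,V)$ if $K\le pk2$, or $K\le k2$ and $V=v2$. Protocol IT-HS (party $i$). Variables: $lock\gets 0$, $lock\_val\gets x_i$; $key3\gets 0$, $key3\_val\gets x_i$; $key2\gets 0$, $key2\_val\gets x_i$, $prev\_key2\gets -1$; $key1\gets 0$, $key1\_val\gets x_i$, $prev\_key1\gets -1$; $view\gets 0$; $highest\_request[j]\gets 0$, $highest\_abort[j]\gets 0$ for $j\in[n]$. ''Send-upon-join $m$'': for each $j$, send $m$ to $j$ as soon as $highest\_request[j]$ equals the current view. Background: (B1) on $\langle request,v\rangle$ from $j$, $highest\_request[j]\gets\max(highest\_request[j],v)$. (B2) on $\langle done,val\rangle$ from $f+1$ parties with the same $val$: if no $done$ sent yet, send $\langle done,val\rangle$ to all. (B3) on $\langle done,val\rangle$ from $n-f$ parties with the same $val$: decide $val$, terminate. (B4) on $\langle abort,v\rangle$ from $j$ with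 $highest\_abort[j]<v$: $highest\_abort[j]\gets v$; $u\gets$ the $(f+1)$-th largest entry of $highest\_abort$; if $u>highest\_abort[i]$ send $\langle abort,u\rangle$ to all and set $highest\_abort[i]\gets u$; $w\gets$ the $(n-f)$-th largest entry; if $w\ge view$ set $view\gets w+1$. Views: for each value $v$ of $view$, while $view=v$: fresh per-view state; after $11\Delta$ local time send $\langle abort,v\rangle$ to all; ignore other views' messages except $abort$, $done$, $request$; primary $p=(v\bmod n)+1$. View change: send $\langle request,v\rangle$ to all; when $highest\_request[p]=v$ send $\langle suggest,key3,key3\_val,key2,key2\_val,prev\_key2,v\rangle$ to $p$; send-upon-join $\langle proof,key1,key1\_val,prev\_key1,v\rangle$. If $i=p$: upon first $\langle suggest,k3,v3,k2,v2,pk2,v\rangle$ from a party, if $pk2<k2<v$ add $(k2,v2,pk2)$ to $key2\_proofs$; if $k3=0$ add $(k3,v3)$ to $suggestions$; else if $k3<v$ add $(k3,v3)$ as soon as at least $f+1$ triples $(k,w,pk)\in key2\_proofs$ satisfy $k3\le pk$ or ($k3\le k$ and $w=v3$); once $|suggestions|\ge n-f$, send-upon-join $\langle propose,k,w,v\rangle$ for $(k,w)\in suggestions$ with maximal $k$. Message processing: upon first $\langle proof,k1,v1,pk1,v\rangle$ from a party, if $v>k1>pk1$ add $(k1,v1,pk1)$ to $proofs$. Upon first $\langle propose,key,val,v\rangle$ from $p$: if $lock=0$ or $val=lock\_val$, send-upon-join $\langle echo,val,v\rangle$; else if $v>key\ge lock$, then once at least $f+1$ triples $(k,w,pk)\in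 proofs$ satisfy $lock\le pk$ or ($lock\le k$ and $w\ne lock\_val$), send-upon-join $\langle echo,val,v\rangle$. Upon $\langle echo,val,v\rangle$ from $n-f$ parties with the same $val$: send-upon-join $\langle key1,val,v\rangle$; if $key1\_val\ne val$ then $prev\_key1\gets key1$, $key1\_val\gets val$; $key1\gets v$. Upon $\langle key1,val,v\rangle$ from $n-f$ parties (same $val$): send-upon-join $\langle key2,val,v\rangle$; if $key2\_val\ne val$ then $prev\_key2\gets key2$, $key2\_val\gets val$; $key2\gets v$. Upon $\langle key2,val,v\rangle$ from $n-f$ (same $val$): send-upon-join $\langle key3,val,v\rangle$; $key3\gets v$, $key3\_val\gets val$. Upon $\langle key3,val,v\rangle$ from $n-f$ (same $val$): send-upon-join $\langle lock,val,v\rangle$; $lock\gets v$, $lock\_val\gets val$. Upon $\langle lock,val,v\rangle$ from $n-f$ (same $val$): if no $done$ sent yet, send $\langle done,val\rangle$ to all. *)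

(* Defs.v *)
From HB Require Import structures.
From mathcomp Require Import all_boot all_order all_algebra.
From Stdlib Require List.
Set Implicit Arguments. Unset Strict Implicit. Unset Printing Implicit Defensive.
Import Order.TTheory GRing.Theory Num.Theory.

Section ITHS.

Variable V : eqType.

(* The five "quorum" message kinds  <echo,val,v>, <key1,val,v>, <key2,val,v>,
   <key3,val,v>, <lock,val,v>, which all have the same shape. *)
Inductive phase := PEcho | PKey1 | PKey2 | PKey3 | PLock.

Definition phase_nat (p : phase) : nat :=
  match p with PEcho => 0 | PKey1 => 1 | PKey2 => 2 | PKey3 => 3 | PLock => 4 end.

Definition next_phase (p : phase) : phase :=
  match p with PEcho => PKey1 | PKey1 => PKey2 | PKey2 => PKey3 | PKey3 => PLock
  | PLock => PLock end.

(* Messages.  Views are natural numbers; key fields are integers (prev_key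
   fields may be -1, and Byzantine parties may send arbitrary integers). *)
Inductive msg :=
| MRequest (v : nat)
| MDone (val : V)
| MAbort (v : nat)
| MSuggest (k3 : int) (v3 : V) (k2 : int) (v2 : V) (pk2 : int) (v : nat)
| MProof (k1 : int) (v1 : V) (pk1 : int) (v : nat)
| MPropose (key : int) (val : V) (v : nat)
| MPhase (ph : phase) (val : V) (v : nat).

Definition supports (k2 : int) (v2 : V) (pk2 : int) (K : int) (W : V) : bool :=
  (K <= pk2)%R || ((K <= k2)%R && (W == v2)).

(* how the first propose of the view was classified upon receipt *)
Inductive pmode := PImm | PCond | PRej.

Variables n f : nat.

Definition party := 'I_n.

Definition is_primary (i : party) (v : nat) : bool := nat_of_ord i == v %% n.
Definition primary (v : nat) : option party := insub (v %% n).

(* fresh per-view state *)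
Record pview := PView {
  pending : seq (msg * {set party});  (* send-upon-join messages, with the
                                          destinations already served *)
  sug_sent : bool;
  timer_fired : bool;                  (* abort (timer) already sent *)
  sug_rcv : party -> option (int * V * int * V * int); (* first suggest per sender *)
  proof_rcv : party -> option (int * V * int);         (* first proof per sender *)
  prop_rcv : option (int * V * pmode);                 (* first propose from p *)
  echo_queued : bool;
  prop_queued : bool;
  from : phase -> party -> V -> bool;  (* quorum messages received *)
  fired : phase -> V -> bool           (* quorum rule already triggered *)
}.

Definition pv0 : pview :=
  PView [::] false false (fun _ => None) (fun _ => None) None false false
        (fun _ _ _ => false) (fun _ _ => false).

Record lstate := LState {
  lock : int; lock_val : V;
  key3 : int; key3_val : V;
  key2 : int; key2_val : V; prev_key2 : int;
  key1 : int; key1_val : V; prev_key1 : int;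
  view : nat;
  hreq : party -> nat;
  habort : party -> nat;
  done_from : party -> V -> bool;
  done_sent : bool;
  decided : option V;              (* Some val once decided (terminated) *)
  pv : pview
}.

Record gstate := GState {
  loc : party -> lstate;
  (* every message ever sent by a nonfaulty party: (sender, receiver, msg) *)
  net : seq (party * party * msg)
}.

Definition set_pv (st : lstate) (p : pview) : lstate :=
  LState (lock st) (lock_val st) (key3 st) (key3_val st) (key2 st) (key2_val st)
    (prev_key2 st) (key1 st) (key1_val st) (prev_key1 st) (view st) (hreq st)
    (habort st) (done_from st) (done_sent st) (decided st) p.

Definition set_hreq (st : lstate) (h : party -> nat) : lstate :=
  LState (lock st) (lock_val st) (key3 st) (key3_val st) (key2 st) (key2_val st)
    (prev_key2 st) (key1 st) (key1_val st) (prev_key1 st) (view st) h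
    (habort st) (done_from st) (done_sent st) (decided st) (pv st).

Definition set_habort (st : lstate) (h : party -> nat) : lstate :=
  LState (lock st) (lock_val st) (key3 st) (key3_val st) (key2 st) (key2_val st)
    (prev_key2 st) (key1 st) (key1_val st) (prev_key1 st) (view st) (hreq st)
    h (done_from st) (done_sent st) (decided st) (pv st).

Definition set_done (st : lstate) (df : party -> V -> bool) (ds : bool)
    (dec : option V) : lstate :=
  LState (lock st) (lock_val st) (key3 st) (key3_val st) (key2 st) (key2_val st)
    (prev_key2 st) (key1 st) (key1_val st) (prev_key1 st) (view st) (hreq st)
    (habort st) df ds dec (pv st).

Definition pv_set_pending (p : pview) (q : seq (msg * {set party})) : pview :=
  PView q (sug_sent p) (timer_fired p) (sug_rcv p) (proof_rcv p) (prop_rcv p)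
    (echo_queued p) (prop_queued p) (from p) (fired p).

Definition pv_queue (p : pview) (m : msg) : pview :=
  pv_set_pending p (rcons (pending p) (m, set0)).

Definition pv_set_flags (p : pview) (ss tf eq pq : bool) : pview :=
  PView (pending p) ss tf (sug_rcv p) (proof_rcv p) (prop_rcv p) eq pq
    (from p) (fired p).

Definition pv_set_rcv (p : pview) sr pr prp : pview :=
  PView (pending p) (sug_sent p) (timer_fired p) sr pr prp
    (echo_queued p) (prop_queued p) (from p) (fired p).

Definition pv_set_from (p : pview) fr fi : pview :=
  PView (pending p) (sug_sent p) (timer_fired p) (sug_rcv p) (proof_rcv p)
    (prop_rcv p) (echo_queued p) (prop_queued p) fr fi.

Definition sendall (i : party) (m : msg) : seq (party * party * msg) :=
  [seq (i, j, m) | j <- enum 'I_n].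

Definition enter_view (i : party) (st : lstate) (w : nat)
    : lstate * seq (party * party * msg) :=
  (LState (lock st) (lock_val st) (key3 st) (key3_val st) (key2 st) (key2_val st)
    (prev_key2 st) (key1 st) (key1_val st) (prev_key1 st) w (hreq st)
    (habort st) (done_from st) (done_sent st) (decided st)
    (pv_queue pv0 (MProof (key1 st) (key1_val st) (prev_key1 st) w)),
   sendall i (MRequest w)).

Definition init_local (x : party -> V) (i : party) : lstate :=
  (enter_view i
     (LState (Posz 0) (x i) (Posz 0) (x i) (Posz 0) (x i) (-1)%R (Posz 0) (x i) (-1)%R 0 (fun _ => 0%N)
        (fun _ => 0%N) (fun _ _ => false) false None pv0) 0).1.

Definition init (x : party -> V) (F : {set party}) : gstate :=
  GState (init_local x)
    (flatten [seq sendall i (MRequest 0) | i <- enum 'I_n & i \notin F]).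

(* k-th largest entry (k >= 1) of a vector of naturals *)
Definition kth_largest (h : party -> nat) (k : nat) : nat :=
  nth 0%N (sort geq [seq h j | j <- enum 'I_n]) k.-1.

Definition on_abort (i src : party) (w : nat) (st : lstate)
    : lstate * seq (party * party * msg) :=
  if (habort st src < w)%N then
    let h1 := fun j => if j == src then w else habort st j in
    let u := kth_largest h1 f.+1 in
    let h2 := if (h1 i < u)%N then (fun j => if j == i then u else h1 j) else h1 in
    let out1 := if (h1 i < u)%N then sendall i (MAbort u) else [::] in
    let st1 := set_habort st h2 in
    let w' := kth_largest h2 (n - f) in
    if (view st1 <= w')%N then
      let r := enter_view i st1 w'.+1 in (r.1, out1 ++ r.2)
    else (st1, out1)
  else (st, [::]).

Definition on_msg (i src : party) (m : msg) (st : lstate)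
    : lstate * seq (party * party * msg) :=
  let p := pv st in
  match m with
  | MRequest w =>
      (set_hreq st (fun j => if j == src then maxn (hreq st j) w else hreq st j), [::])
  | MDone val =>
      (set_done st (fun j u => ((j == src) && (u == val)) || done_from st j u)
         (done_sent st) (decided st), [::])
  | MAbort w => on_abort i src w st
  | MSuggest k3 v3 k2 v2 pk2 w =>
      if (w == view st) && is_primary i w then
        match sug_rcv p src with
        | None =>
            (set_pv st (pv_set_rcv p
               (fun j => if j == src then Some (k3, v3, k2, v2, pk2) else sug_rcv p j)
               (proof_rcv p) (prop_rcv p)), [::])
        | Some _ => (st, [::])
        end
      else (st, [::])
  | MProof k1 v1 pk1 w =>
      if w == view st then
        match proof_rcv p src with
        | None =>
            (set_pv st (pv_set_rcv p (sug_rcv p)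
               (fun j => if j == src then Some (k1, v1, pk1) else proof_rcv p j)
               (prop_rcv p)), [::])
        | Some _ => (st, [::])
        end
      else (st, [::])
  | MPropose key val w =>
      if (w == view st) && is_primary src w then
        match prop_rcv p with
        | None =>
            let md :=
              if (lock st == 0) || (val == lock_val st) then PImm
              else if (key < Posz w)%R && (lock st <= key)%R then PCond
              else PRej in
            (set_pv st (pv_set_rcv p (sug_rcv p) (proof_rcv p)
                          (Some (key, val, md))), [::])
        | Some _ => (st, [::])
        end
      else (st, [::])
  | MPhase ph val w =>
      if w == view st then
        (set_pv st (pv_set_from p
           (fun ph' j u => ((phase_nat ph' == phase_nat ph) && (j == src) && (u == val))
                           || from p ph' j u)
           (fired p)), [::])
      else (st, [::])
  end.

Definition k2proof_ok (st : lstate) (j : party) (K : int) (W : V) : bool :=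
  match sug_rcv (pv st) j with
  | Some (_, _, k, w, pk) =>
      (pk < k)%R && (k < Posz (view st))%R && ((K <= pk)%R || ((K <= k)%R && (w == W)))
  | None => false
  end.

Definition accepted (st : lstate) (j : party) : bool :=
  match sug_rcv (pv st) j with
  | Some (k3, v3, _, _, _) =>
      (k3 == 0) ||
      ((k3 < Posz (view st))%R && (f.+1 <= #|[set j' | k2proof_ok st j' k3 v3]|)%N)
  | None => false
  end.

Definition sug_pair (st : lstate) (j : party) : int * V :=
  match sug_rcv (pv st) j with
  | Some (k3, v3, _, _, _) => (k3, v3)
  | None => (Posz 0, lock_val st) (* unused *)
  end.

Definition proof_ok (st : lstate) (j : party) : bool :=
  match proof_rcv (pv st) j with
  | Some (k, w, pk) =>
      (Posz (view st) > k)%R && (k > pk)%R &&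
      ((lock st <= pk)%R || ((lock st <= k)%R && (w != lock_val st)))
  | None => false
  end.

Definition quorum_update (st : lstate) (ph : phase) (val : V) : lstate :=
  let v := Posz (view st) in
  match ph with
  | PEcho =>
      LState (lock st) (lock_val st) (key3 st) (key3_val st) (key2 st) (key2_val st)
        (prev_key2 st) v val (if key1_val st != val then key1 st else prev_key1 st)
        (view st) (hreq st) (habort st) (done_from st) (done_sent st) (decided st) (pv st)
  | PKey1 =>
      LState (lock st) (lock_val st) (key3 st) (key3_val st) v val
        (if key2_val st != val then key2 st else prev_key2 st)
        (key1 st) (key1_val st) (prev_key1 st)
        (view st) (hreq st) (habort st) (done_from st) (done_sent st) (decided st) (pv st)
  | PKey2 =>
      LState (lock st) (lock_val st) v val (key2 st) (key2_val st)
        (prev_key2 st) (key1 st) (key1_val st) (prev_key1 st)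
        (view st) (hreq st) (habort st) (done_from st) (done_sent st) (decided st) (pv st)
  | PKey3 =>
      LState v val (key3 st) (key3_val st) (key2 st) (key2_val st)
        (prev_key2 st) (key1 st) (key1_val st) (prev_key1 st)
        (view st) (hreq st) (habort st) (done_from st) (done_sent st) (decided st) (pv st)
  | PLock => st
  end.

Definition upd (g : gstate) (i : party) (st : lstate) (out : seq (party * party * msg))
    : gstate :=
  GState (fun j => if j == i then st else loc g j) (net g ++ out).

Inductive label :=
| LDeliver (src dst : party) (m : msg)
| LTimer (i : party)
| LSendJoin (i : party) (k : nat) (j : party)
| LSuggest (i : party)
| LQuorum (i : party) (ph : phase) (val : V)
| LLockDone (i : party) (val : V)
| LDoneRelay (i : party) (val : V)
| LDecide (i : party) (val : V)
| LPropose (i : party) (k : int) (w : V)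
| LEcho (i : party).

Variable F : {set party}.  (* the Byzantine parties *)

(* internal (immediately triggered) actions of nonfaulty party i *)
Inductive istep (g : gstate) : label -> gstate -> Prop :=
| IS_SendJoin i k j m D :
    i \notin F -> decided (loc g i) = None ->
    (k < size (pending (pv (loc g i))))%N ->
    nth (MRequest 0, set0) (pending (pv (loc g i))) k = (m, D) ->
    j \notin D -> hreq (loc g i) j = view (loc g i) ->
    istep g (LSendJoin i k j)
      (upd g i (set_pv (loc g i) (pv_set_pending (pv (loc g i))
                  (set_nth (MRequest 0, set0) (pending (pv (loc g i))) k (m, j |: D))))
           [:: (i, j, m)])
| IS_Suggest i p :
    i \notin F -> decided (loc g i) = None ->
    ~~ sug_sent (pv (loc g i)) ->
    primary (view (loc g i)) = Some p -> hreq (loc g i) p = view (loc g i) ->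
    istep g (LSuggest i)
      (let st := loc g i in let q := pv st in
       upd g i (set_pv st (pv_set_flags q true (timer_fired q) (echo_queued q) (prop_queued q)))
         [:: (i, p, MSuggest (key3 st) (key3_val st) (key2 st) (key2_val st)
                              (prev_key2 st) (view st))])
| IS_Quorum i ph val :
    i \notin F -> decided (loc g i) = None ->
    ph <> PLock -> ~~ fired (pv (loc g i)) ph val ->
    (n - f <= #|[set j | from (pv (loc g i)) ph j val]|)%N ->
    istep g (LQuorum i ph val)
      (let st := loc g i in let q := pv st in
       let q' := pv_set_from q (from q)
                   (fun ph' u => ((phase_nat ph' == phase_nat ph) && (u == val)) || fired q ph' u) in
       upd g i (set_pv (quorum_update st ph val)
                  (pv_queue q' (MPhase (next_phase ph) val (view st)))) [::])
| IS_LockDone i val :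
    i \notin F -> decided (loc g i) = None ->
    ~~ done_sent (loc g i) ->
    (n - f <= #|[set j | from (pv (loc g i)) PLock j val]|)%N ->
    istep g (LLockDone i val)
      (upd g i (set_done (loc g i) (done_from (loc g i)) true None)
         (sendall i (MDone val)))
| IS_DoneRelay i val :
    i \notin F -> decided (loc g i) = None ->
    ~~ done_sent (loc g i) ->
    (f.+1 <= #|[set j | done_from (loc g i) j val]|)%N ->
    istep g (LDoneRelay i val)
      (upd g i (set_done (loc g i) (done_from (loc g i)) true None)
         (sendall i (MDone val)))
| IS_Decide i val :
    i \notin F -> decided (loc g i) = None ->
    (n - f <= #|[set j | done_from (loc g i) j val]|)%N ->
    istep g (LDecide i val)
      (upd g i (set_done (loc g i) (done_from (loc g i)) (done_sent (loc g i)) (Some val))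
         [::])
| IS_Propose i j k w :
    i \notin F -> decided (loc g i) = None ->
    is_primary i (view (loc g i)) -> ~~ prop_queued (pv (loc g i)) ->
    (n - f <= #|[set j' | accepted (loc g i) j']|)%N ->
    accepted (loc g i) j -> sug_pair (loc g i) j = (k, w) ->
    (forall j', accepted (loc g i) j' -> ((sug_pair (loc g i) j').1 <= k)%R) ->
    istep g (LPropose i k w)
      (let st := loc g i in let q := pv st in
       upd g i (set_pv st (pv_queue (pv_set_flags q (sug_sent q) (timer_fired q)
                                        (echo_queued q) true)
                                    (MPropose k w (view st)))) [::])
| IS_Echo i key val md :
    i \notin F -> decided (loc g i) = None ->
    prop_rcv (pv (loc g i)) = Some (key, val, md) ->
    ~~ echo_queued (pv (loc g i)) ->
    (md = PImm \/ (md = PCond /\ (f.+1 <= #|[set j | proof_ok (loc g i) j]|)%N)) ->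
    istep g (LEcho i)
      (let st := loc g i in let q := pv st in
       upd g i (set_pv st (pv_queue (pv_set_flags q (sug_sent q) (timer_fired q)
                                        true (prop_queued q))
                                    (MPhase PEcho val (view st)))) [::]).

Definition label_party (l : label) : party :=
  match l with
  | LDeliver _ dst _ => dst
  | LTimer i | LSendJoin i _ _ | LSuggest i | LQuorum i _ _ | LLockDone i _
  | LDoneRelay i _ | LDecide i _ | LPropose i _ _ | LEcho i => i
  end.

(* party i has no pending immediate action ("as soon as" / "upon" rules are
   executed before party i handles any further external event) *)
Definition quiescent (g : gstate) (i : party) : Prop :=
  forall l g', istep g l g' -> label_party l <> i.

Inductive step (g : gstate) : label -> gstate -> Prop :=
| S_Internal l g' : istep g l g' -> step g l g'
| S_Deliver src i m :
    i \notin F -> decided (loc g i) = None -> quiescent g i ->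
    (* authenticated channels: a message from a nonfaulty sender must have
       been sent by it; a Byzantine sender may send anything *)
    (src \in F \/ List.In (src, i, m) (net g)) ->
    step g (LDeliver src i m)
      (let r := on_msg i src m (loc g i) in upd g i r.1 r.2)
| S_Timer i :
    i \notin F -> decided (loc g i) = None -> quiescent g i ->
    ~~ timer_fired (pv (loc g i)) ->
    step g (LTimer i)
      (let st := loc g i in let q := pv st in
       upd g i (set_pv st (pv_set_flags q (sug_sent q) true (echo_queued q) (prop_queued q)))
         (sendall i (MAbort (view st)))).

Fixpoint valid_exec (g : gstate) (tr : seq (label * gstate)) : Prop :=
  match tr with
  | [::] => True
  | (l, g') :: tr' => step g l g' /\ valid_exec g' tr'
  end.

Definition final_state (g0 : gstate) (tr : seq (label * gstate)) : gstate :=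
  last g0 (map snd tr).

(* in the execution tr from g0, nonfaulty party i sets key3 := view and
   key3_val := val (upon <key2,val,v> from n-f parties) while in view v *)
Definition sets_key3 (g0 : gstate) (tr : seq (label * gstate)) (i : party)
    (v : nat) (val : V) : Prop :=
  exists tr1 tr2 g',
    tr = tr1 ++ (LQuorum i PKey2 val, g') :: tr2 /\
    view (loc (final_state g0 tr1) i) = v.

End ITHS.

(* Main.v *)
Require Import Defs.
From HB Require Import structures.
From mathcomp Require Import all_boot all_order all_algebra.
From mathcomp Require Import zify.
From Stdlib Require List.
Set Implicit Arguments. Unset Strict Implicit. Unset Printing Implicit Defensive.
Import Order.TTheory GRing.Theory Num.Theory.


Lemma In_cat (T : Type) (x : T) (s1 s2 : seq T) :
  List.In x (s1 ++ s2) <-> List.In x s1 \/ List.In x s2.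
Proof.
elim: s1 => [|y s IH] /=; first by split; [right|case].
rewrite IH; tauto.
Qed.

Lemma In_map (T U : Type) (g : T -> U) (y : U) (s : seq T) :
  List.In y (map g s) -> exists x, y = g x.
Proof.
elim: s => [|a s IH] //= [<-|H]; first by exists a.
exact: IH.
Qed.

Lemma In_rcons (T : Type) (x y : T) (s : seq T) :
  List.In x (rcons s y) -> x = y \/ List.In x s.
Proof.
elim: s => [|a s IH] /=; first by case=> // ->; left.
case=> [->|/IH]; tauto.
Qed.

Lemma In_nth (T : Type) (x0 : T) (s : seq T) k :
  (k < size s)%N -> List.In (nth x0 s k) s.
Proof.
elim: s k => [|a s IH] [|k] //= Hk; first by left.
right; exact: IH.
Qed.

Lemma In_set_nth (T : Type) (x0 x z : T) (s : seq T) k :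
  (k < size s)%N -> List.In x (set_nth x0 s k z) -> x = z \/ List.In x s.
Proof.
elim: s k => [|a s IH] [|k] //= Hk.
  case=> [->|H]; [by left| by right; right].
case=> [->|H]; first by right; left.
case: (IH k Hk H); tauto.
Qed.

Lemma In_sendall (V : eqType) n (i : party n) (m : msg V) e :
  List.In e (sendall i m) -> e.1.1 = i /\ e.2 = m.
Proof. rewrite /sendall => H; by have [j ->] := In_map H. Qed.

Definition RecN (V : eqType) n (N : seq (party n * party n * msg V)) (st : lstate V n)
  (j : party n) (u : nat) (val : V) : Prop :=
  (exists d, List.In (j, d, MPhase PKey2 val u) N) \/
  (exists D, List.In (MPhase PKey2 val u, D) (pending (pv st))).

Definition is_sug (V : eqType) (m : msg V) : bool :=
  if m is MSuggest _ _ _ _ _ _ then true else false.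
Definition is_k2 (V : eqType) (m : msg V) : bool :=
  if m is MPhase PKey2 _ _ then true else false.

Record PI (V : eqType) n (F : {set party n}) (st : lstate V n)
    (N : seq (party n * party n * msg V)) (j : party n) : Prop := MkPI {
  pi_a : (key2 st <= Posz (view st))%R;
  pi_b : (prev_key2 st <= key2 st)%R;
  pi_c : forall u val, RecN N st j u val ->
           (u <= view st)%N /\ supports (key2 st) (key2_val st) (prev_key2 st) (Posz u) val;
  pi_d : forall dst k3 v3 k2 v2 pk2 w,
           List.In (j, dst, MSuggest k3 v3 k2 v2 pk2 w) N ->
           (w <= view st)%N /\
           forall u val, RecN N st j u val -> (u < w)%N -> supports k2 v2 pk2 (Posz u) val;
  pi_e : forall m D, List.In (m, D) (pending (pv st)) -> ~~ is_sug m;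
  pi_f : forall ph k val, from (pv st) ph k val -> k \notin F ->
           List.In (k, j, MPhase ph val (view st)) N
}.

Lemma PI_other (V : eqType) n (F : {set party n}) st N out j :
  PI F st N j -> (forall e, List.In e out -> e.1.1 <> j) ->
  @PI V n F st (N ++ out) j.
Proof.
move=> [a b c d e f] Hout.
have HR : forall u val, RecN (N ++ out) st j u val -> RecN N st j u val.
  move=> u val [[dd /In_cat [H|/Hout //]]|H]; [left; by exists dd | by right].
constructor=> //.
- by move=> u val /HR /c.
- move=> dst k3 v3 k2 v2 pk2 w /In_cat [H|/Hout //].
  have [H1 H2] := d _ _ _ _ _ _ _ H; split=> // u val /HR; exact: H2.
- by move=> ph k val Hf Hk; apply/In_cat; left; apply: f.
Qed.

Lemma PI_mono (V : eqType) n (F : {set party n}) st st' N out i :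
  PI F st N i ->
  key2 st' = key2 st -> key2_val st' = key2_val st -> prev_key2 st' = prev_key2 st ->
  (view st <= view st')%N ->
  (forall u val, RecN (N ++ out) st' i u val -> RecN N st i u val) ->
  (forall d k3 v3 k2 v2 pk2 w, List.In (i, d, MSuggest k3 v3 k2 v2 pk2 w) out ->
     (w <= view st')%N /\
     forall u val, RecN N st i u val -> (u < w)%N -> supports k2 v2 pk2 (Posz u) val) ->
  (forall m D, List.In (m, D) (pending (pv st')) -> ~~ is_sug m) ->
  (forall ph k val, from (pv st') ph k val -> k \notin F ->
     List.In (k, i, MPhase ph val (view st')) (N ++ out)) ->
  @PI V n F st' (N ++ out) i.
Proof.
move=> [a b c d e f] E1 E2 E3 Hv HR Hs Hp Hf.
constructor=> //; rewrite ?E1 ?E2 ?E3 //.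
- apply: (le_trans a); rewrite lez_nat //.
- move=> u val /HR /c [H1 H2]; split=> //; exact: leq_trans Hv.
- move=> dst k3 v3 k2 v2 pk2 w /In_cat [H|H].
    have [H1 H2] := d _ _ _ _ _ _ _ H; split; first exact: leq_trans Hv.
    move=> u val /HR; exact: H2.
  have [H1 H2] := Hs _ _ _ _ _ _ _ H; split=> // u val /HR; exact: H2.
Qed.

Section Proj.
Context (V : eqType) (n : nat) (F : {set party n}) (st : lstate V n)
  (N : seq (party n * party n * msg V)) (j : party n) (HP : PI F st N j).
Lemma PIpA : (key2 st <= Posz (view st))%R. Proof. by case: HP. Qed.
Lemma PIpB : (prev_key2 st <= key2 st)%R. Proof. by case: HP. Qed.
Lemma PIpC u val : RecN N st j u val ->
  (u <= view st)%N /\ supports (key2 st) (key2_val st) (prev_key2 st) (Posz u) val.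
Proof. move=> H; case: HP => _ _ c _ _ _; exact: c H. Qed.
Lemma PIpD dst k3 v3 k2 v2 pk2 w :
  List.In (j, dst, MSuggest k3 v3 k2 v2 pk2 w) N ->
  (w <= view st)%N /\
  forall u val, RecN N st j u val -> (u < w)%N -> supports k2 v2 pk2 (Posz u) val.
Proof. move=> H; case: HP => _ _ _ d _ _; exact: d H. Qed.
Lemma PIpE m D : List.In (m, D) (pending (pv st)) -> ~~ is_sug m.
Proof. move=> H; case: HP => _ _ _ _ e _; exact: e H. Qed.
Lemma PIpF ph k val : from (pv st) ph k val -> k \notin F ->
  List.In (k, j, MPhase ph val (view st)) N.
Proof. move=> Hf Hk; case: HP => _ _ _ _ _ H; exact: H. Qed.
End Proj.

Lemma PI_simple (V : eqType) n (F : {set party n}) st st' N out i :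
  PI F st N i ->
  key2 st' = key2 st -> key2_val st' = key2_val st -> prev_key2 st' = prev_key2 st ->
  (view st <= view st')%N ->
  (forall ph k val, from (pv st') ph k val -> from (pv st) ph k val /\ view st' = view st) ->
  (forall e, List.In e out -> ~~ is_sug e.2 && ~~ is_k2 e.2) ->
  (forall m D, List.In (m, D) (pending (pv st')) ->
     List.In (m, D) (pending (pv st)) \/ (~~ is_sug m && ~~ is_k2 m)) ->
  @PI V n F st' (N ++ out) i.
Proof.
move=> HP E1 E2 E3 Ev Ef Hout Hpend.
apply: (PI_mono HP) => //.
- move=> u val [[d /In_cat [H|/Hout //]]|[D /Hpend [H|//]]].
    by left; exists d.
  by right; exists D.
- by move=> d k3 v3 k2 v2 pk2 w /Hout.
- move=> m D /Hpend [H|/andP [//]]; exact (PIpE HP H).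
- move=> ph k val /Ef [Hf ->] Hk; apply/In_cat; left; exact (PIpF HP Hf Hk).
Qed.

Lemma In_rcons_pend (V : eqType) n (s : seq (msg V * {set party n})) m0 m D :
  ~~ is_sug m0 && ~~ is_k2 m0 ->
  List.In (m, D) (rcons s (m0, set0)) -> List.In (m, D) s \/ (~~ is_sug m && ~~ is_k2 m).
Proof. move=> H H1; case: (In_rcons H1) => [[-> _]|H']; [by right|by left]. Qed.

Lemma sendall_ok (V : eqType) n (i : party n) (m : msg V) :
  ~~ is_sug m && ~~ is_k2 m ->
  (forall e, List.In e (sendall i m) -> ~~ is_sug e.2 && ~~ is_k2 e.2) /\
  (forall e, List.In e (sendall i m) -> e.1.1 = i).
Proof. move=> H; split=> e He; case: (In_sendall He) => E1 E2; [by rewrite E2 | exact E1]. Qed.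

Ltac sa_tac := match goal with
  | He : List.In _ (_ ++ _) |- _ => case/In_cat: He => He; sa_tac
  | He : List.In _ (sendall _ _) |- _ => case: (In_sendall He) => -> -> //
  | He : List.In _ [::] |- _ => case: He
  | He : False |- _ => case: He
  end.

Lemma on_abort_ok (V : eqType) n f (i src : party n) w (st : lstate V n) :
  let r := on_abort f i src w st in
  (forall e, List.In e r.2 -> e.1.1 = i /\ ~~ is_sug e.2 && ~~ is_k2 e.2) /\
  key2 r.1 = key2 st /\ key2_val r.1 = key2_val st /\ prev_key2 r.1 = prev_key2 st /\
  (view st <= view r.1)%N /\
  (forall m D, List.In (m, D) (pending (pv r.1)) ->
     List.In (m, D) (pending (pv st)) \/ (~~ is_sug m && ~~ is_k2 m)) /\
  (forall ph k val, from (pv r.1) ph k val -> from (pv st) ph k val /\ view r.1 = view st).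
Proof.
rewrite /on_abort; case: ifP => Hw /=; last first.
  by do 5 (split=> //); split=> [m D H|ph k val H]; [left|].
case: ifP => H1; case: ifP => H2 /=; rewrite ?H2 in H1.
all: split; [move=> e He; try sa_tac|].
all: do 3 (split; first by []).
all: split; [first [exact: leqnn | exact: leqW H1]|].
all: split; [move=> m D /= H; first [by left | by case: H => [[<- _]|//]; right]|].
all: by move=> ph k val /= H.
Qed.

Lemma PI_key1 (V : eqType) n (F : {set party n}) st N i (val : V) fi :
  PI F st N i ->
  PI F (set_pv (quorum_update st PKey1 val)
          (pv_queue (pv_set_from (pv st) (from (pv st)) fi)
             (MPhase PKey2 val (view st)))) N i.
Proof.
move=> HP.
have HR : forall u v', RecN N (set_pv (quorum_update st PKey1 val)
          (pv_queue (pv_set_from (pv st) (from (pv st)) fi)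
             (MPhase PKey2 val (view st)))) i u v' ->
          RecN N st i u v' \/ (u = view st /\ v' = val).
  move=> u v' [[d H]|[D H]]; first by left; left; exists d.
  case: (In_rcons H) => [[-> -> _]|H']; first by right.
  by left; right; exists D.
have Ha := PIpA HP; have Hb := PIpB HP.
constructor => /=.
- exact: lexx.
- case: ifP => _ //; exact: le_trans Hb Ha.
- move=> u v' /HR [HR'|[-> ->]]; last by rewrite /supports lexx eqxx orbT.
  have [Hu Hs] := PIpC HP HR'; split => //.
  rewrite /supports; have [_|Hne] := eqVneq v' val; first by rewrite lez_nat Hu orbT.
  rewrite andbF orbF; move: Hs; rewrite /supports.
  case: ifP => Hk /orP [H|/andP [H1 /eqP H2]].
  + exact: le_trans H Hb.
  + exact: H1.
  + exact: H.
  + move/negbFE: Hk => /eqP Hk; by move: Hne; rewrite H2 Hk eqxx.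
- move=> dst k3 v3 k2 v2 pk2 w H.
  have [Hw Hs] := PIpD HP H; split => // u v' /HR [HR'|[-> _]] Hu.
    exact: Hs HR' Hu.
  by move: (leq_trans Hu Hw); rewrite ltnn.
- move=> m D H; case: (In_rcons H) => [[-> _]|H'] //; exact (PIpE HP H').
- move=> ph k v' Hf Hk; exact (PIpF HP Hf Hk).
Qed.



Lemma step_dec (V : eqType) n f (F : {set party n}) g l g' :
  @step V n f F g l g' ->
  exists i st' out, g' = upd g i st' out /\ i \notin F /\
    (forall e, List.In e out -> e.1.1 = i) /\
    (PI F (loc g i) (net g) i -> PI F st' (net g ++ out) i).
Proof.
case=> [l0 g0 []|src i m Hnf Hdec Hq Hin|i Hnf Hdec Hq Htf].
- move=> i k j m D Hnf Hdec Hk Hnth HjD Hreq.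
  do 3 eexists; split; first reflexivity.
  split=> //; split; first by move=> e [<-|].
  move=> HP.
  have HmD : List.In (m, D) (pending (pv (loc g i))) by rewrite -Hnth; exact: In_nth.
  apply: (PI_mono HP) => //=.
  + move=> u val [[d /In_cat [H|[E|//]]]|[D' /(In_set_nth Hk) [E|H]]].
    * by left; exists d.
    * case: E => _ Em; subst m; by right; exists D.
    * case: E => Em _; subst m; by right; exists D.
    * by right; exists D'.
  + move=> d k3 v3 k2 v2 pk2 w [E|//]; case: E => _ Em; subst m.
    by move: (PIpE HP HmD).
  + move=> m0 D0 /(In_set_nth Hk) [[-> _]|H]; [exact: (PIpE HP HmD) | exact: (PIpE HP H)].
  + move=> ph k0 val Hf Hk0; apply/In_cat; left; exact (PIpF HP Hf Hk0).
- move=> i p Hnf Hdec Hss Hprim Hreq.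
  do 3 eexists; split; first reflexivity.
  split=> //; split; first by move=> e [<-|].
  move=> HP; apply: (PI_mono HP) => //=.
  + move=> u val [[d /In_cat [H|[E|//]]]|[D H]].
    * by left; exists d.
    * by [].
    * by right; exists D.
  + move=> d k3 v3 k2 v2 pk2 w [E|//]; case: E => _ _ _ <- <- <- <-.
    split=> // u val HR Hu; exact: (PIpC HP HR).2.
  + move=> m D H; exact (PIpE HP H).
  + move=> ph k val Hf Hk; apply/In_cat; left; exact (PIpF HP Hf Hk).
- move=> i ph val Hnf Hdec Hph Hfired Hcard.
  do 3 eexists; split; first reflexivity.
  split=> //; split=> //.
  move=> HP; case: ph Hph Hfired Hcard => // Hph _ _;
   [ | by rewrite cats0; apply: PI_key1 | | ]; (apply: (PI_simple HP) => //=; by move=> m D; apply: In_rcons_pend).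
- move=> i val Hnf Hdec Hds Hc.
  do 3 eexists; split; first reflexivity.
  have [H1 H2] := @sendall_ok V n i (MDone val) isT.
  split=> //; split=> // HP; apply: (PI_simple HP) => //=.
  by move=> m D H; left.
- move=> i val Hnf Hdec Hds Hc.
  do 3 eexists; split; first reflexivity.
  have [H1 H2] := @sendall_ok V n i (MDone val) isT.
  split=> //; split=> // HP; apply: (PI_simple HP) => //=.
  by move=> m D H; left.
- move=> i val Hnf Hdec Hc.
  do 3 eexists; split; first reflexivity.
  split=> //; split=> // HP; apply: (PI_simple HP) => //=.
  by move=> m D H; left.
- move=> i j k w Hnf Hdec Hprim Hpq Hc Hacc Hsp Hmax.
  do 3 eexists; split; first reflexivity.
  split=> //; split=> // HP; apply: (PI_simple HP) => //=.
  by move=> m D; apply: In_rcons_pend.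
- move=> i key val md Hnf Hdec Hprop Heq Hmd.
  do 3 eexists; split; first reflexivity.
  split=> //; split=> // HP; apply: (PI_simple HP) => //=.
  by move=> m D; apply: In_rcons_pend.
- exists i, (on_msg f i src m (loc g i)).1, (on_msg f i src m (loc g i)).2.
  split; first reflexivity. split => //.
  rewrite /on_msg; case: m Hin => [w|val|w|k3 v3 k2 v2 pk2 w|k1 v1 pk1 w|key val w|ph val w] Hin.
  + split=> // HP; apply: (PI_simple HP) => //=; by move=> m D H; left.
  + split=> // HP; apply: (PI_simple HP) => //=; by move=> m D H; left.
  + have HH := on_abort_ok f i src w (loc g i); cbv zeta in HH.
    case: HH => [Ho [E1 [E2 [E3 [Ev [Hp Hf]]]]]].
    split; first by move=> e /Ho [].
    move=> HP; apply: (PI_simple HP E1 E2 E3 Ev Hf _ Hp) => e /Ho [] //.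
  + case: ifP => _ /=; [case: (sug_rcv _ _) => [?|] /=|];
    (split=> // HP; apply: (PI_simple HP) => //=; by move=> m D H; left).
  + case: ifP => _ /=; [case: (proof_rcv _ _) => [?|] /=|];
    (split=> // HP; apply: (PI_simple HP) => //=; by move=> m D H; left).
  + case: ifP => _ /=; [case: (prop_rcv _) => [?|] /=|];
    (split=> // HP; apply: (PI_simple HP) => //=; by move=> m D H; left).
  + case: ifP => Hw /=; last first.
      split=> // HP; apply: (PI_simple HP) => //=; by move=> m D H; left.
    split=> // HP; apply: (PI_mono HP) => //=.
    * move=> u v' [[d /In_cat [H|[]]]|[D H]]; [by left; exists d | by right; exists D].
    * move=> m D H; exact (PIpE HP H).
    * move=> ph' k v' /orP [/andP [/andP [Hph /eqP Hk] /eqP Hv]|Hf] Hk'.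
        subst k v'; apply/In_cat; left.
        have Eph : ph' = ph by clear -Hph; move: Hph; case: ph; case: ph'.
        subst ph'; rewrite -(eqP Hw).
        by case: Hin => // Hin; rewrite Hin in Hk'.
      apply/In_cat; left; exact (PIpF HP Hf Hk').
- do 3 eexists; split; first reflexivity.
  have [H1 H2] := @sendall_ok V n i (MAbort V (view (loc g i))) isT.
  split=> //; split=> // HP; apply: (PI_simple HP) => //=.
  by move=> m D H; left.
Qed.



Definition Inv (V : eqType) n (F : {set party n}) (g : gstate V n) : Prop :=
  forall j, j \notin F -> PI F (loc g j) (net g) j.

Lemma Inv_step (V : eqType) n f (F : {set party n}) g l g' :
  Inv F g -> @step V n f F g l g' ->
  Inv F g' /\ (forall e, List.In e (net g) -> List.In e (net g')).
Proof.
move=> HI Hs; have [i [st' [out [-> [Hi [Ho HPi]]]]]] := step_dec Hs.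
split; last by move=> e H; apply/In_cat; left.
move=> j Hj; rewrite /upd /=; case: eqP => [->|Hne].
  exact: HPi (HI i Hi).
apply: PI_other (HI j Hj) _ => e /Ho -> Eij; exact: Hne.
Qed.

Lemma Inv_exec (V : eqType) n f (F : {set party n}) g tr :
  @valid_exec V n f F g tr -> Inv F g ->
  Inv F (final_state g tr) /\
  (forall e, List.In e (net g) -> List.In e (net (final_state g tr))).
Proof.
elim: tr g => [|[l g1] tr IH] g /=; first by [].
move=> [Hs Hv] HI.
have [HI1 Hn1] := Inv_step HI Hs.
have [HI2 Hn2] := IH g1 Hv HI1.
split; first exact: HI2.
by move=> e /Hn1 /Hn2.
Qed.

Lemma exec_split (V : eqType) n f (F : {set party n}) g tr1 tr2 :
  @valid_exec V n f F g (tr1 ++ tr2) ->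
  valid_exec f F g tr1 /\ valid_exec f F (final_state g tr1) tr2.
Proof.
elim: tr1 g => [|[l g1] tr IH] g /=; first by [].
move=> [Hs Hv]; have [H1 H2] := IH g1 Hv; by [].
Qed.

Lemma final_cat (V : eqType) n (g : gstate V n) tr1 tr2 :
  final_state g (tr1 ++ tr2) = final_state (final_state g tr1) tr2.
Proof. by rewrite /final_state map_cat last_cat. Qed.

Lemma In_flatten_map (T U : Type) (h : T -> seq U) (s : seq T) e :
  List.In e (flatten (map h s)) -> exists x, List.In e (h x).
Proof.
elim: s => [|a s IH] //= /In_cat [H|H]; first by exists a.
exact: IH.
Qed.

Lemma Inv_init (V : eqType) n (F : {set party n}) (x : party n -> V) :
  Inv F (init x F).
Proof.
have Hnet : forall e, List.In e (net (init x F)) -> e.2 = MRequest V 0.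
  move=> e /= H; have [y Hy] := In_flatten_map H.
  by case: (In_sendall Hy).
move=> j Hj; constructor => //=.
- move=> u val [[d /Hnet //]|[D [E|//]]] //.
- by move=> dst k3 v3 k2 v2 pk2 w /Hnet.
- by move=> m D [[<- _]|].
Qed.

Lemma quorum_card (V : eqType) n f (F : {set party n}) g i ph val g' :
  @step V n f F g (LQuorum i ph val) g' ->
  (n - f <= #|[set j | from (pv (loc g i)) ph j val]|)%N.
Proof.
move=> H; inversion H as [l0 g0 Hi| |]; subst.
inversion Hi; subst; assumption.
Qed.


Unset Implicit Arguments.

Theorem lemma2p9 (V : eqType) (n f : nat) (x : 'I_n -> V) (F : {set 'I_n})
    (tr : seq (label V n * gstate V n))
    (hn : (3 * f < n)%N) (hF : (#|F| <= f)%N)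
    (hexec : valid_exec f F (init x F) tr)
    (i : 'I_n) (v : nat) (val : V)
    (hi : i \notin F)
    (hset : sets_key3 (init x F) tr i v val) :
  exists S : {set 'I_n},
    #|S| = f.+1 /\ [disjoint S & F] /\
    forall j, j \in S ->
    forall (dst : 'I_n) (k3 : int) (v3 : V) (k2 : int) (v2 : V) (pk2 : int) (w : nat),
      List.In (j, dst, MSuggest k3 v3 k2 v2 pk2 w) (net (final_state (init x F) tr)) ->
      (v < w)%N ->
      supports k2 v2 pk2 (Posz v) val.
Proof.
move: hset => [tr1 [tr2 [g' [Etr Hv]]]]; subst tr.
have [H1 H2] := exec_split hexec.
rewrite final_cat.
set gpre := final_state (init x F) tr1 in Hv H2 *.
have [Ipre _] := Inv_exec H1 (@Inv_init V n F x).
case: H2 => Hstep Hrest.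
have Hcard := quorum_card Hstep.
have [Ig' Hnet1] := Inv_step Ipre Hstep.
have [Ifin Hnet2] := Inv_exec Hrest Ig'.
set P := [set j | from (pv (loc gpre i)) PKey2 j val] in Hcard.
set A := P :\: F.
have HA : (f.+1 <= #|A|)%N.
  have := cardsD P F; have := subset_leq_card (subsetIr P F).
  rewrite /A => h1 ->; have h2 := leq_trans h1 hF; clear h1; move: Hcard h2 hn; move: (#|P|) (#|P :&: F|) => a b; lia.
exists [set y in take f.+1 (enum A)].
have Hsub : forall y, y \in [set y in take f.+1 (enum A)] -> y \in A.
  by move=> y; rewrite inE => /mem_take; rewrite mem_enum.
split.
  rewrite cardsE.
  have /card_uniqP -> : uniq (take f.+1 (enum A)) by rewrite take_uniq ?enum_uniq.
  by rewrite size_takel // -cardE.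
split.
  rewrite disjoints_subset; apply/subsetP => y /Hsub; rewrite !inE => /andP [Hy _]; exact Hy.
move=> j /Hsub; rewrite !inE => /andP [HjF Hj] dst k3 v3 k2 v2 pk2 w Hin Hvw.
have Hm := PIpF (Ipre i hi) Hj HjF; rewrite Hv in Hm.
have [_ Hs] := PIpD (Ifin j HjF) Hin.
apply: Hs Hvw; left; exists i; apply: Hnet2; apply: Hnet1; exact Hm.
Qed.
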